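(* Let $\mu$ be a Krull valuation on $\overline{\mathbb{K}}[x]$, let $f\in\overline{\mathbb{K}}[x]$ be non-constant and $a$ an optimizing root of $f$. If $g\in\overline{\mathbb{K}}[x]$ is non-constant with $\delta(g)<\delta(f)$, then $g(a)\neq 0$, $$\mu_{x-a}(g)=\mu(g)=\mu(g(a)),$$ and $\mu_{x-a}(g/g(a))=0$ with residue $\left(g/g(a)\right)\mu_{x-a}=1$ in the residue field of $\mu_{x-a}$ on $\overline{\mathbb{K}}(x)$. Moreover, if $\mathbb{K}\subseteq\overline{\mathbb{K}}$ is a subfield with $\overline{\mathbb{K}}$ its algebraic closure, $Q\in\mathbb{K}[x]$ is a key polynomial for the restriction $\nu=\mu|_{\mathbb{K}[x]}$ and $a$ is an optimizing root of $Q$, then $\mu_{x-a}(Q)=\mu(Q)$.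
   Context: For non-constant $f\in\overline{\mathbb{K}}[x]$, $\delta(f)=\max\{\mu(x-c):f(c)=0\}$, and a root $c$ with $\mu(x-c)=\delta(f)$ is an optimizing root. $\mu_{x-a}$ is the truncation of $\mu$ at $x-a$: $\mu_{x-a}(\sum_i c_i(x-a)^i)=\min_i\{\mu(c_i)+i\mu(x-a)\}$, a valuation on $\overline{\mathbb{K}}[x]$ extended to $\overline{\mathbb{K}}(x)$. Key polynomials: for nonzero $f\in\mathbb{K}[x]$, with Hasse derivatives $\partial_bf=\sum_{i\ge b}\binom{i}{b}a_ix^{i-b}$ for $f=\sum a_ix^i$, $\epsilon(f)=\max_{1\le b\le\deg f}(\nu(f)-\nu(\partial_bf))/b$ if $\deg f>0$ and $\epsilon(f)=-\infty$ if $f$ is constant; a monic $Q$ is a key polynomial for $\nu$ if $\epsilon(f)\ge\epsilon(Q)$ implies $\deg f\ge\deg Q$ for all $f$. *)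

(* Defs.v *)
From mathcomp Require Import all_boot all_order all_algebra.
Set Implicit Arguments. Unset Strict Implicit. Unset Printing Implicit Defensive.
Import GRing.Theory.
Local Open Scope ring_scope.

Definition ordered_group (G : zmodType) (le : rel G) : Prop :=
  [/\ reflexive le, antisymmetric le, transitive le, total le &
      forall x y z, le x y -> le (x + z) (y + z)].

Definition glt (G : zmodType) (le : rel G) (x y : G) : bool := le x y && (x != y).

Definition gmin (G : zmodType) (le : rel G) (x y : G) : G := if le x y then x else y.

(* Minimum of a finite list of values (0 on the empty list, never used). *)
Definition gminseq (G : zmodType) (le : rel G) (s : seq G) : G :=
  match s with [::] => 0 | v :: vs => foldl (gmin le) v vs end.

(* mu : {poly F} -> G represents a valuation with values in G \cup {oo},
   with mu(p) = oo iff p = 0 (trivial support); the value of [mu] at 0 is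
   irrelevant and never used. *)
Definition krull_valuation (F : fieldType) (G : zmodType) (le : rel G)
    (mu : {poly F} -> G) : Prop :=
  (forall f g : {poly F}, f != 0 -> g != 0 -> mu (f * g) = mu f + mu g) /\
  (forall f g : {poly F}, f != 0 -> g != 0 -> f + g != 0 ->
      le (mu f) (mu (f + g)) || le (mu g) (mu (f + g))).

Definition is_delta (F : fieldType) (G : zmodType) (le : rel G)
    (mu : {poly F} -> G) (f : {poly F}) (d : G) : Prop :=
  (exists c, root f c /\ mu ('X - c%:P) = d) /\
  (forall c, root f c -> le (mu ('X - c%:P)) d).

Definition optimizing_root (F : fieldType) (G : zmodType) (le : rel G)
    (mu : {poly F} -> G) (f : {poly F}) (a : F) : Prop :=
  root f a /\ is_delta le mu f (mu ('X - a%:P)).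

(* Truncation mu_{x-a}(g) = min_i { mu(c_i) + i mu(x-a) } where
   g = sum_i c_i (x-a)^i, i.e. c_i is the i-th coefficient of g(x + a);
   the minimum ranges over the nonzero c_i (mu(0) = oo). *)
Definition trunc (F : fieldType) (G : zmodType) (le : rel G)
    (mu : {poly F} -> G) (a : F) (g : {poly F}) : G :=
  let h := g \Po ('X + a%:P) in
  gminseq le [seq mu (h`_i)%:P + mu ('X - a%:P) *+ i
             | i <- iota 0 (size h) & h`_i != 0].

(* Comparison eps(f) >= eps(Q) for nonzero f, Q, where
   eps(f) = max_{1<=b<=deg f} (nu(f) - nu(d_b f))/b  (Hasse derivatives
   d_b f = f^`N(b)), eps(f) = -oo for constant f, and terms with d_b f = 0
   are -oo (nu(0) = oo).  The quotients live in the divisible hull of G;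
   A/b >= C/c is expressed as c*A >= b*C (G is torsion free), and
   max_b A_b/b >= max_c C_c/c as: some b dominates every c. *)
Definition eps_ge (F : fieldType) (G : zmodType) (le : rel G)
    (nu : {poly F} -> G) (f Q : {poly F}) : Prop :=
  (size Q <= 1)%N \/
  ((1 < size f)%N /\
   exists b : nat, [/\ (1 <= b <= (size f).-1)%N, f^`N(b) != 0 &
     forall c : nat, (1 <= c <= (size Q).-1)%N -> Q^`N(c) != 0 ->
       le ((nu Q - nu Q^`N(c)) *+ b) ((nu f - nu f^`N(b)) *+ c)]).

Definition key_poly (F : fieldType) (K : {pred F}) (G : zmodType) (le : rel G)
    (nu : {poly F} -> G) (Q : {poly F}) : Prop :=
  Q \is monic /\ Q \is a polyOver K /\
  forall f : {poly F}, f \is a polyOver K -> f != 0 ->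
    eps_ge le nu f Q -> (size Q <= size f)%N.

(* Main.v *)
Require Import Defs.
From mathcomp Require Import all_boot all_order all_algebra.
Import GRing.Theory.
Local Open Scope ring_scope.
Set Implicit Arguments. Unset Strict Implicit.

Section OG.
Variables (G : zmodType) (le : rel G).
Hypothesis og : ordered_group le.

Lemma le_refl' x : le x x. Proof. by case: og => r _ _ _ _; apply: r. Qed.
Lemma le_trans' y x z : le x y -> le y z -> le x z.
Proof. case: og => _ _ t _ _; exact: t. Qed.
Lemma le_anti x y : le x y -> le y x -> x = y.
Proof. case: og => _ a _ _ _ h1 h2; apply: a; by rewrite h1 h2. Qed.
Lemma le_total' x y : le x y || le y x. Proof. by case: og => _ _ _ t _; apply: t. Qed.
Lemma le_addr x y z : le x y -> le (x + z) (y + z). Proof. by case: og => _ _ _ _ h; apply: h. Qed.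
Lemma le_addl x y z : le x y -> le (z + x) (z + y).
Proof. by rewrite ![z + _]addrC; apply: le_addr. Qed.
Lemma le_addr_rev x y z : le (x + z) (y + z) -> le x y.
Proof. move/(le_addr (-z)); by rewrite !addrK. Qed.
Lemma le_add x y z w : le x y -> le z w -> le (x + z) (y + w).
Proof. move=> h1 h2; apply: (le_trans' (y := y + z)); [exact: (le_addr z h1)|exact: (le_addl y h2)]. Qed.
Lemma nle_ge x y : ~~ le x y -> le y x.
Proof. by case/orP: (le_total' x y) => [->|]. Qed.

Lemma glt_le x y : glt le x y -> le x y. Proof. by case/andP. Qed.
Lemma lt_le_trans y x z : glt le x y -> le y z -> glt le x z.
Proof.
case/andP=> h1 h2 h3; rewrite /glt (le_trans' h1 h3) /=; apply/eqP=> e; subst z.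
by move/eqP: h2; apply; apply: le_anti.
Qed.
Lemma le_lt_trans y x z : le x y -> glt le y z -> glt le x z.
Proof.
move=> h1 /andP[h2 h3]; rewrite /glt (le_trans' h1 h2) /=; apply/eqP=> e; subst z.
by move/eqP: h3; apply; apply: le_anti.
Qed.
Lemma glt_addr x y z : glt le x y -> glt le (x + z) (y + z).
Proof. case/andP=> h1 h2; by rewrite /glt le_addr //= (inj_eq (addIr z)). Qed.
Lemma glt_addl x y z : glt le x y -> glt le (z + x) (z + y).
Proof. by rewrite ![z + _]addrC; apply: glt_addr. Qed.
Lemma glt_addr_rev x y z : glt le (x + z) (y + z) -> glt le x y.
Proof. rewrite /glt (inj_eq (addIr z)) => /andP[h1 ->]; by rewrite (le_addr_rev h1). Qed.
Lemma nlt_ge x y : ~~ glt le x y -> le x y -> x = y.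
Proof. by rewrite /glt => h h'; move: h; rewrite h' /= negbK => /eqP. Qed.
Lemma nlt_le x y : ~~ glt le x y -> le y x.
Proof.
move=> h; case h': (le x y); last by apply: nle_ge; rewrite h'.
by rewrite (nlt_ge h h') le_refl'.
Qed.
Lemma lt_add x y z w : glt le x y -> le z w -> glt le (x + z) (y + w).
Proof. move=> h1 h2; apply: (lt_le_trans (y := y + z)); [exact: glt_addr| exact: le_addl]. Qed.
Lemma double0 (x : G) : x + x = 0 -> x = 0.
Proof.
move=> e; case/orP: (le_total' 0 x) => h.
  have := le_addr x h; rewrite add0r e => h'; exact: le_anti.
have := le_addr x h; rewrite add0r e => h'; exact: le_anti.
Qed.

Lemma foldl_gmin s x : (foldl (gmin le) x s \in x :: s) /\
  (forall y, y \in x :: s -> le (foldl (gmin le) x s) y).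
Proof.
elim: s x => [|z s IH] x /=.
  by split; [rewrite mem_head | move=> y; rewrite inE => /eqP ->; apply: le_refl'].
have [m1 m2] := IH (gmin le x z).
have gx : le (gmin le x z) x /\ le (gmin le x z) z.
  by rewrite /gmin; case h: (le x z); split=> //; rewrite ?le_refl' //; apply: nle_ge; rewrite h.
split.
  move: m1; rewrite !inE /gmin; case: (le x z) => /orP[/eqP->|->]; by rewrite ?eqxx ?orbT.
move=> y; rewrite !inE => /orP[/eqP->|/orP[/eqP->|ys]].
- apply: le_trans' (m2 _ (mem_head _ _)) _; exact: gx.1.
- apply: le_trans' (m2 _ (mem_head _ _)) _; exact: gx.2.
- by apply: m2; rewrite inE ys orbT.
Qed.

Lemma gminseq_eq s v : v \in s -> (forall y, y \in s -> le v y) -> gminseq le s = v.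
Proof.
case: s => [//|x s] vs h /=; have [m1 m2] := foldl_gmin s x.
apply: le_anti; [exact: m2|exact: h].
Qed.

Lemma gminseq_lt s v : (exists y, y \in s) -> (forall y, y \in s -> glt le v y) ->
  glt le v (gminseq le s).
Proof.
case: s => [[y //]|x s] _ h /=; have [m1 m2] := foldl_gmin s x; exact: h.
Qed.

Lemma exists_max (T : eqType) (phi : T -> G) (s : seq T) : s != [::] ->
  exists2 b, b \in s & forall b', b' \in s -> le (phi b') (phi b).
Proof.
elim: s => [//|x s IH] _.
have [->|sn] := eqVneq s [::].
  exists x; first by rewrite mem_head.
  by move=> b'; rewrite inE => /eqP ->; apply: le_refl'.
have [b bs hb] := IH sn.
case/orP: (le_total' (phi x) (phi b)) => h.
  exists b; first by rewrite inE bs orbT.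
  by move=> b'; rewrite inE => /orP[/eqP ->//|]; apply: hb.
exists x; first by rewrite mem_head.
move=> b'; rewrite inE => /orP[/eqP ->|hb']; first by apply: le_refl'.
exact: (le_trans' (hb _ hb') h).
Qed.

End OG.

Section Val.
Variables (G : zmodType) (le : rel G) (F : fieldType) (mu : {poly F} -> G).
Hypothesis og : ordered_group le.
Hypothesis kv : krull_valuation le mu.

Lemma muM p q : p != 0 -> q != 0 -> mu (p * q) = mu p + mu q.
Proof. by case: kv => h _; apply: h. Qed.
Lemma mu_ultra p q : p != 0 -> q != 0 -> p + q != 0 ->
  le (mu p) (mu (p + q)) || le (mu q) (mu (p + q)).
Proof. by case: kv => _ h; apply: h. Qed.
Lemma mu1 : mu 1 = 0.
Proof.
have := muM (oner_neq0 _) (oner_neq0 _); rewrite mulr1 => h.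
have : mu 1 + 0 = mu 1 + mu 1 by rewrite addr0.
by move/addrI.
Qed.
Lemma muN1 : mu (-1) = 0.
Proof.
apply: (double0 og); rewrite -muM ?oppr_eq0 ?oner_eq0 //.
by rewrite mulrNN mulr1 mu1.
Qed.
Lemma muN p : p != 0 -> mu (- p) = mu p.
Proof. by move=> p0; rewrite -mulN1r muM ?oppr_eq0 ?oner_eq0 // muN1 add0r. Qed.

Lemma mu_lt_add p q : p != 0 -> q != 0 -> glt le (mu p) (mu q) ->
  p + q != 0 /\ mu (p + q) = mu p.
Proof.
move=> p0 q0 hlt.
have pq0 : p + q != 0.
  apply/negP; rewrite addr_eq0 => /eqP e; move: hlt; rewrite e muN //.
  by rewrite /glt eqxx andbF.
split=> //.
have h1 : le (mu p) (mu (p + q)).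
  case/orP: (mu_ultra p0 q0 pq0) => // h.
  exact: (le_trans' og (glt_le hlt) h).
have h2 : le (mu (p + q)) (mu p).
  have := @mu_ultra (p + q) (- q) pq0; rewrite oppr_eq0 addrK muN // => /(_ q0 p0) /orP[//|h].
  by move: (hlt); rewrite /glt (le_anti og (glt_le hlt) h) eqxx andbF.
exact (le_anti og h2 h1).
Qed.

Lemma muCM (x y : F) : x != 0 -> y != 0 -> mu (x * y)%:P = mu x%:P + mu y%:P.
Proof. by move=> x0 y0; rewrite polyCM muM ?polyC_eq0. Qed.

Lemma ultraC_le (c k : G) (x y : F) : x + y != 0 ->
  (x != 0 -> le c (mu x%:P + k)) -> (y != 0 -> le c (mu y%:P + k)) ->
  le c (mu (x + y)%:P + k).
Proof.
have [->|x0] := eqVneq x 0; first by rewrite add0r => yn _ h; exact (h yn).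
have [->|y0] := eqVneq y 0; first by rewrite addr0 => _ h _; by apply: h.
move=> s hx hy.
have := @mu_ultra x%:P y%:P; rewrite !polyC_eq0 -polyCD polyC_eq0 => /(_ x0 y0 s) /orP[] h.
  exact (le_trans' og (hx isT) (le_addr og k h)).
exact (le_trans' og (hy isT) (le_addr og k h)).
Qed.

Lemma ultraC_lt (c k : G) (x y : F) : x + y != 0 ->
  (x != 0 -> glt le c (mu x%:P + k)) -> (y != 0 -> glt le c (mu y%:P + k)) ->
  glt le c (mu (x + y)%:P + k).
Proof.
have [->|x0] := eqVneq x 0; first by rewrite add0r => yn _ h; exact (h yn).
have [->|y0] := eqVneq y 0; first by rewrite addr0 => _ h _; by apply: h.
move=> s hx hy.
have := @mu_ultra x%:P y%:P; rewrite !polyC_eq0 -polyCD polyC_eq0 => /(_ x0 y0 s) /orP[] h.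
  exact (lt_le_trans og (hx isT) (le_addr og k h)).
exact (lt_le_trans og (hy isT) (le_addr og k h)).
Qed.

Lemma ultraC_eq (x y : F) : x != 0 -> (y != 0 -> glt le (mu x%:P) (mu y%:P)) ->
  x + y != 0 /\ mu (x + y)%:P = mu x%:P.
Proof.
have [->|y0] := eqVneq y 0; first by rewrite addr0.
move=> x0 /(_ isT) lt.
have := @mu_lt_add x%:P y%:P; rewrite !polyC_eq0 -polyCD polyC_eq0.
by move=> /(_ x0 y0 lt).
Qed.

End Val.

Section Inv.
Variables (G : zmodType) (le : rel G) (F : fieldType) (mu : {poly F} -> G) (a : F).
Hypothesis og : ordered_group le.
Hypothesis kv : krull_valuation le mu.
Local Notation m := (mu ('X - a%:P)).
Local Notation H p := (p \Po ('X + a%:P)).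

Definition Inv (p : {poly F}) (v : G) (i1 : nat) : Prop :=
  [/\ (H p)`_i1 != 0, mu ((H p)`_i1)%:P + m *+ i1 = v,
      forall i, (H p)`_i != 0 -> le v (mu ((H p)`_i)%:P + m *+ i) &
      forall i, (i1 < i)%N -> (H p)`_i != 0 -> glt le v (mu ((H p)`_i)%:P + m *+ i)].

Lemma Inv_base c : c != 0 -> Inv c%:P (mu c%:P) 0.
Proof.
move=> c0; rewrite /Inv comp_polyC; split.
- by rewrite coefC /=.
- by rewrite coefC /= mulr0n addr0.
- case=> [|i]; rewrite coefC /= ?eqxx //; rewrite mulr0n addr0 => _; exact: (le_refl' og).
- by case=> [|i] //; rewrite coefC /= ?eqxx.
Qed.

Lemma Inv_step p i1 b : p != 0 -> Inv p (mu p) i1 -> le (mu ('X - b%:P)) m ->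
  Inv (p * ('X - b%:P)) (mu (p * ('X - b%:P))) (i1 + ~~ glt le (mu ('X - b%:P)) m).
Proof.
move=> p0 [hi1 hv hle hlt] hb.
have Xb0 : 'X - b%:P != 0 by rewrite polyXsubC_eq0.
have Xa0 : 'X - a%:P != 0 by rewrite polyXsubC_eq0.
rewrite (muM kv) //.
have eXb : 'X - b%:P = ('X - a%:P) + (a - b)%:P by rewrite polyCB addrA subrK.
have hcomp : H (p * ('X - b%:P)) = H p * 'X + H p * (a - b)%:P.
  by rewrite comp_polyM comp_polyB comp_polyX comp_polyC -mulrDr polyCB addrA.
rewrite /Inv hcomp.
move: hi1 hv hle hlt eXb; set h := H p; set e := mu ('X - b%:P); set d := a - b.
move=> hi1 hv hle hlt eXb.
have cf i : (h * 'X + h * d%:P)`_i = (if i == 0%N then 0 else h`_i.-1) + h`_i * d.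
  by rewrite coefD coefMX coefMC.
have T1 j : mu (h`_j)%:P + m *+ j.+1 = (mu (h`_j)%:P + m *+ j) + m.
  by rewrite mulrSr addrA.
have T2 i : h`_i != 0 -> d != 0 -> mu (h`_i * d)%:P + m *+ i = (mu (h`_i)%:P + m *+ i) + mu d%:P.
  by move=> h0 d0; rewrite (muCM kv) // addrAC.
have ltdm : d != 0 -> glt le (mu d%:P) m -> e = mu d%:P.
  move=> d0 lt; have := @mu_lt_add _ _ _ _ og kv d%:P ('X - a%:P).
  by rewrite polyC_eq0 [d%:P + _]addrC -eXb => /(_ d0 Xa0 lt) [].
have [ltem|nlt] := boolP (glt le e m).
- rewrite addn0.
  have d0 : d != 0.
    apply/eqP => d0; move: ltem; rewrite /e eXb d0 polyC0 addr0.
    by rewrite /glt eqxx andbF.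
  have emd : e = mu d%:P.
    apply: ltdm => //; apply/negPn/negP => nlt.
    have lmd := nlt_le og nlt.
    have := @mu_ultra _ _ _ _ kv ('X - a%:P) d%:P Xa0; rewrite polyC_eq0 -eXb -/e.
    move=> /(_ d0 Xb0) /orP[] h'.
      by move: (ltem); rewrite /glt (le_anti og (glt_le ltem) h') eqxx andbF.
    have h'' := le_trans' og lmd h'.
    by move: (ltem); rewrite /glt (le_anti og (glt_le ltem) h'') eqxx andbF.
  have key : glt le (mu p + e) (mu p + m) := glt_addl og _ ltem.
  have [nz eq] : (h`_i1 * d + (if i1 == 0%N then 0 else h`_i1.-1)) != 0 /\
      mu (h`_i1 * d + (if i1 == 0%N then 0 else h`_i1.-1))%:P = mu (h`_i1 * d)%:P.
    apply: (ultraC_eq og kv); first exact: mulf_neq0.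
    case: i1 hi1 hv hlt => [|j] hi1 hv hlt /= hj; first by rewrite eqxx in hj.
    apply: (glt_addr_rev og (z := m *+ j.+1)).
    rewrite T2 // hv T1 -emd.
    apply: (lt_le_trans og key); apply: (le_addr og).
    exact: hle.
  split.
  + by rewrite cf [_ + h`_i1 * d]addrC.
  + by rewrite cf [_ + h`_i1 * d]addrC eq T2 // hv emd.
  + move=> i; rewrite cf => nz'.
    apply: (ultraC_le og kv) => //.
      case: i nz' => [|j] /= _ hj; first by rewrite eqxx in hj. rewrite T1.
      apply: (le_trans' og (glt_le key)); apply: (le_addr og); exact: hle.
    move=> hd; have hi : h`_i != 0 by apply: contraNneq hd => ->; rewrite mul0r.
    rewrite T2 // emd; apply: (le_addr og); exact: hle.
  + move=> i lti; rewrite cf => nz'.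
    apply: (ultraC_lt og kv) => //.
      case: i lti nz' => [|j] /= lti _ hj; first by rewrite eqxx in hj. rewrite T1.
      apply: (lt_le_trans og key); apply: (le_addr og); exact: hle.
    move=> hd; have hi : h`_i != 0 by apply: contraNneq hd => ->; rewrite mul0r.
    rewrite T2 // emd; apply: (glt_addr og); exact: hlt.
- rewrite addn1.
  have hem : e = m by exact (nlt_ge nlt hb).
  have hd : d != 0 -> le m (mu d%:P).
    move=> d0; apply: (nlt_le og); apply/negP => lt.
    by move: nlt; rewrite (ltdm d0 lt) lt.
  have [nz eq] : (h`_i1 + h`_i1.+1 * d) != 0 /\
      mu (h`_i1 + h`_i1.+1 * d)%:P = mu (h`_i1)%:P.
    apply: (ultraC_eq og kv) => // hy.
    have hy1 : h`_i1.+1 != 0 by apply: contraNneq hy => ->; rewrite mul0r.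
    have d0 : d != 0 by apply: contraNneq hy => ->; rewrite mulr0.
    apply: (glt_addr_rev og (z := m *+ i1.+1)).
    rewrite T2 // T1 hv.
    apply: (lt_add og); [exact: hlt | exact: hd].
  split.
  + by rewrite cf.
  + by rewrite cf /= eq T1 hv hem.
  + move=> i; rewrite cf => nz'.
    apply: (ultraC_le og kv) => //.
      case: i nz' => [|j] /= _ hj; first by rewrite eqxx in hj. rewrite T1 hem.
      apply: (le_addr og); exact: hle.
    move=> hy; have hi : h`_i != 0 by apply: contraNneq hy => ->; rewrite mul0r.
    have d0 : d != 0 by apply: contraNneq hy => ->; rewrite mulr0.
    rewrite T2 // hem; apply: (le_add og); [exact: hle | exact: hd].
  + move=> i lti; rewrite cf => nz'.
    apply: (ultraC_lt og kv) => //.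
      case: i lti nz' => [|j] /= lti _ hj; first by rewrite eqxx in hj. rewrite T1 hem.
      apply: (glt_addr og); exact: hlt.
    move=> hy; have hi : h`_i != 0 by apply: contraNneq hy => ->; rewrite mul0r.
    have d0 : d != 0 by apply: contraNneq hy => ->; rewrite mulr0.
    rewrite T2 // hem; apply: (lt_add og); [apply: hlt => //; exact: ltnW | exact: hd].
Qed.

Lemma Inv_prod s c : c != 0 -> (forall b, b \in s -> le (mu ('X - b%:P)) m) ->
  Inv (c%:P * \prod_(b <- s) ('X - b%:P)) (mu (c%:P * \prod_(b <- s) ('X - b%:P)))
      (count (fun b => ~~ glt le (mu ('X - b%:P)) m) s).
Proof.
move=> c0; elim: s => [|b s IH] hs.
  by rewrite big_nil mulr1 /=; apply: Inv_base.
rewrite big_cons mulrCA (mulrC ('X - b%:P)) /= addnC.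
apply: Inv_step.
- by rewrite mulf_neq0 ?polyC_eq0 ?monic_neq0 ?monic_prod_XsubC.
- by apply: IH => b' hb'; apply: hs; rewrite inE hb' orbT.
- by apply: hs; rewrite mem_head.
Qed.

Lemma Inv_trunc p v i1 : Inv p v i1 -> trunc le mu a p = v.
Proof.
case=> hi1 hv hle _; rewrite /trunc /=.
apply: (gminseq_eq og).
  apply/mapP; exists i1; last by rewrite hv.
  rewrite mem_filter hi1 mem_iota add0n /=.
  by rewrite ltnNge; apply: contra hi1 => hs; rewrite nth_default.
by move=> y /mapP [i]; rewrite mem_filter => /andP[hi _] ->; apply: hle.
Qed.

End Inv.

Theorem lemma2p12 (F : closedFieldType) (G : zmodType) (le : rel G)
    (mu : {poly F} -> G) :
  ordered_group le -> krull_valuation le mu ->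
  (forall (f g : {poly F}) (a : F),
     (1 < size f)%N -> optimizing_root le mu f a ->
     (1 < size g)%N ->
     (forall dg df : G, is_delta le mu g dg -> is_delta le mu f df -> glt le dg df) ->
     [/\ g.[a] != 0,
         trunc le mu a g = mu g,
         mu g = mu (g.[a])%:P,
         trunc le mu a ((g.[a])^-1 *: g) = 0 &
         glt le 0 (trunc le mu a ((g.[a])^-1 *: g - 1))]) /\
  (forall (K : {pred F}) (Q : {poly F}) (a : F),
     divring_closed K ->
     (forall z : F, exists p : {poly F}, [/\ p != 0, p \is a polyOver K & root p z]) ->
     key_poly K le mu Q ->
     optimizing_root le mu Q a ->
     trunc le mu a Q = mu Q).
Proof.
move=> og kv; split.
- move=> f g a hf [rfa dfa] hg hdelta.
  have H0 p : (p \Po ('X + a%:P))`_0 = p.[a].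
    by rewrite -horner_coef0 horner_comp hornerD hornerX hornerC add0r.
  have [s gE] := closed_field_poly_normal g.
  set c := lead_coef g in gE.
  have g0 : g != 0 by rewrite -size_poly_gt0 (ltn_trans _ hg).
  have c0 : c != 0 by rewrite lead_coef_eq0.
  set P := \prod_(z <- s) ('X - z%:P) in gE.
  have gE' : g = c%:P * P by rewrite mul_polyC -gE.
  have sn : s != [::].
    apply/eqP => e; move: hg; rewrite gE size_scale // /P e big_nil size_poly1.
    by [].
  have rootg z : root g z = (z \in s) by rewrite gE rootZ // root_prod_XsubC.
  have [bm bms hbm] := exists_max og (fun z => mu ('X - z%:P)) sn.
  have dg : is_delta le mu g (mu ('X - bm%:P)).
    split; first by exists bm; rewrite rootg.
    by move=> z; rewrite rootg; apply: hbm.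
  have ltgm := hdelta _ _ dg dfa.
  have hall b : b \in s -> glt le (mu ('X - b%:P)) (mu ('X - a%:P)).
    by move=> hb; apply: (le_lt_trans og (hbm b hb) ltgm).
  have Invc c' : c' != 0 -> Inv le mu a (c'%:P * P) (mu (c'%:P * P)) 0.
    move=> c'0; have := Inv_prod og kv (a := a) c'0 (fun b hb => glt_le (hall b hb)).
    by rewrite (@eq_in_count _ _ pred0) ?count_pred0 // => b hb /=; rewrite hall.
  have gInv := Invc c c0; rewrite -gE' in gInv.
  have [hi1 hv _ _] := gInv; rewrite H0 in hi1 hv.
  have ga : g.[a] != 0 by [].
  have g'E : g.[a]^-1 *: g = (g.[a]^-1 * c)%:P * P.
    by rewrite polyCM -mulrA -gE' mul_polyC.
  have g'Inv := Invc _ (mulf_neq0 (invr_neq0 ga) c0); rewrite -g'E in g'Inv.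
  set q := g.[a]^-1 *: g in g'E g'Inv *.
  have qa : q.[a] = 1 by rewrite /q hornerZ mulVf.
  have mq : mu q = 0.
    by case: g'Inv => _ hv' _ _; rewrite H0 qa mulr0n addr0 polyC1 (mu1 kv) in hv'.
  split.
  + exact ga.
  + exact (Inv_trunc og gInv).
  + by rewrite -hv mulr0n addr0.
  + by rewrite (Inv_trunc og g'Inv).
  + case: g'Inv => _ _ _ hlt'.
    rewrite /trunc /=.
    have hqE : (q - 1) \Po ('X + a%:P) = (q \Po ('X + a%:P)) - 1.
      by rewrite comp_polyB -[X in _ - (X \Po _)]polyC1 comp_polyC polyC1.
    rewrite hqE.
    set hq := (q \Po ('X + a%:P)) - 1.
    have szq : size (q \Po ('X + a%:P)) = size g.
      by rewrite size_comp_poly2 ?size_XaddC // /q size_scale // invr_eq0.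
    have szhq : size hq = size g.
      rewrite /hq size_polyDl -?szq // size_polyN size_poly1 szq //.
    have hq0 : hq != 0 by rewrite -size_poly_gt0 szhq (ltn_trans _ hg).
    apply: (gminseq_lt og).
      exists (mu (hq`_(size hq).-1)%:P + mu ('X - a%:P) *+ (size hq).-1).
      apply/mapP; exists (size hq).-1 => //.
      rewrite mem_filter mem_iota add0n /=.
      have -> : hq`_(size hq).-1 = lead_coef hq by [].
      rewrite lead_coef_eq0 hq0 /=.
      by rewrite prednK // size_poly_gt0.
    move=> y /mapP [i]; rewrite mem_filter mem_iota => /andP[hi _] ->.
    move: hi; rewrite /hq coefB coef1.
    case: i => [|j] /=.
      by rewrite H0 qa subrr eqxx.
    rewrite ?mulr0n subr0 => hj.
    by rewrite -mq; apply: hlt'.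
- move=> K Q a _ _ [mon _] [rQa dQ].
  have [s QE] := closed_field_poly_normal Q.
  rewrite (monicP mon) scale1r in QE.
  have QE' : Q = 1%:P * \prod_(z <- s) ('X - z%:P) by rewrite polyC1 mul1r.
  have hs b : b \in s -> le (mu ('X - b%:P)) (mu ('X - a%:P)).
    by move=> hb; apply: dQ.2; rewrite QE root_prod_XsubC.
  have := Inv_prod og kv (a := a) (oner_neq0 F) hs.
  by rewrite -QE' => /(Inv_trunc og).
Qed.
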